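(* Let $\phi\in\Phi$, let $f:\mathbb{R}^n\to(-\infty,+\infty]$ be proper lsc, $\Omega\subseteq\mathbb{R}^n$ closed, $\delta\ge0$, $p\in[1,\infty]$, and $\mathcal{J}=\{J_1,\dots,J_m\}$ a partition of $\{1,\dots,n\}$. Suppose the problem $$\textstyle (P)\quad \min_{x\in\mathbb{R}^n}\{\|G_{\mathcal{J},p}(x)\|_0:\ f(x)\le\delta,\ x\in\Omega\}$$ has a nonempty global optimal solution set and optimal value $s^*$. Consider $$\textstyle (Q)\quad \min_{x\in\mathbb{R}^n,w\in\mathbb{R}^m}\{\sum_{i=1}^m\phi(w_i):\ \langle e-w,G_{\mathcal{J},p}(x)\rangle=0,\ 0\le w\le e,\ x\in\Omega,\ f(x)\le\delta\}.$$ If $x^*$ is a global optimal solution of $(P)$, then $(x^*,\max(\mathrm{sgn}(G_{\mathcal{J},p}(x^* )),t^*e))$ (max taken componentwise) is a global optimal solution of $(Q)$ and the optimal value of $(Q)$ equals $s^*$; conversely, if $(x^*,w^* )$ is a global optimal solution of $(Q)$, then $x^*$ is a global optimal solution of $(P)$.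
   Context: $\Phi$ is the family of proper lsc functions $\phi:\mathbb{R}\to(-\infty,+\infty]$ with $\mathrm{int}(\mathrm{dom}\,\phi)\supseteq[0,1]$, convex on $[0,1]$, such that $\min_{t\in[0,1]}\phi(t)=0$ is attained at a (fixed) point $t^*\in[0,1)$, and $\phi(1)=1$. $G_{\mathcal{J},p}(x):=(\|x_{J_1}\|_p,\dots,\|x_{J_m}\|_p)^T$, where $x_{J_i}$ is the subvector of $x$ indexed by $J_i$; $\|v\|_0$ is the number of nonzero entries of $v$; $e$ is the all-ones vector; $\mathrm{sgn}$ is applied componentwise. *)

(* Defs.v *)
From Stdlib Require Import Reals.
From mathcomp Require Import ssreflect ssrfun ssrbool eqtype ssrnat seq fintype.
Set Implicit Arguments.
Unset Strict Implicit.
Open Scope R_scope.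

Inductive erl := Fin (r : R) | PInf.

Definition ele (a b : erl) : Prop :=
  match a, b with
  | _, PInf => True
  | PInf, Fin _ => False
  | Fin x, Fin y => x <= y
  end.

Definition elt_real (a : R) (b : erl) : Prop :=
  match b with PInf => True | Fin y => a < y end.

Definition eplus (a b : erl) : erl :=
  match a, b with Fin x, Fin y => Fin (x + y) | _, _ => PInf end.

Definition vec (n : nat) := 'I_n -> R.

Definition sumI (n : nat) (F : 'I_n -> R) : R :=
  foldr Rplus 0 (map F (enum 'I_n)).

(* sup-norm distance on R^n (all norms equivalent: topology of R^n) *)
Definition supdist (n : nat) (x y : vec n) : R :=
  foldr Rmax 0 (map (fun j => Rabs (x j - y j)) (enum 'I_n)).

Definition proper_vec (n : nat) (f : vec n -> erl) : Prop := exists x, f x <> PInf.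

Definition lsc_vec (n : nat) (f : vec n -> erl) : Prop :=
  forall x a, elt_real a (f x) ->
    exists r, 0 < r /\ forall y, supdist x y < r -> elt_real a (f y).

Definition closed_vec (n : nat) (S : vec n -> Prop) : Prop :=
  forall x, (forall eps, 0 < eps -> exists y, S y /\ supdist x y < eps) -> S x.

Definition proper_R (phi : R -> erl) : Prop := exists t, phi t <> PInf.

Definition lsc_R (phi : R -> erl) : Prop :=
  forall t a, elt_real a (phi t) ->
    exists r, 0 < r /\ forall u, Rabs (u - t) < r -> elt_real a (phi u).

Definition in_Phi (phi : R -> erl) (tstar : R) : Prop :=
  proper_R phi /\ lsc_R phi /\
  (* int(dom phi) contains [0,1] *)
  (exists a b, a < 0 /\ 1 < b /\ forall t, a < t < b -> phi t <> PInf) /\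
  (forall s t l a c d, 0 <= s <= 1 -> 0 <= t <= 1 -> 0 <= l <= 1 ->
     phi s = Fin a -> phi t = Fin c -> phi (l * s + (1 - l) * t) = Fin d ->
     d <= l * a + (1 - l) * c) /\
  0 <= tstar < 1 /\ phi tstar = Fin 0 /\
  (forall t, 0 <= t <= 1 -> ele (Fin 0) (phi t)) /\
  phi 1 = Fin 1.

Inductive pexp := PFin (p : R) | PInfty.
Definition valid_p (p : pexp) : Prop :=
  match p with PFin q => 1 <= q | PInfty => True end.

Definition rpow (a q : R) : R :=
  if Req_EM_T a 0 then 0 else Rpower a q.

Definition pnorm_sub (n : nat) (J : 'I_n -> bool) (p : pexp) (x : vec n) : R :=
  match p with
  | PFin q => rpow (foldr Rplus 0
                      (map (fun j => rpow (Rabs (x j)) q) (filter J (enum 'I_n))))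
                   (1 / q)
  | PInfty => foldr Rmax 0 (map (fun j => Rabs (x j)) (filter J (enum 'I_n)))
  end.

(* A partition J = {J_1,...,J_m} of {1..n} is given by the block map
   b : 'I_n -> 'I_m (J_i = b^{-1}(i)), surjective so that blocks are nonempty. *)
Definition G (n m : nat) (b : 'I_n -> 'I_m) (p : pexp) (x : vec n) : 'I_m -> R :=
  fun i => pnorm_sub (fun j => b j == i) p x.

Definition l0 (m : nat) (v : 'I_m -> R) : nat :=
  count (fun i => if Req_EM_T (v i) 0 then false else true) (enum 'I_m).

Definition sgn (r : R) : R :=
  if Rlt_dec 0 r then 1 else if Rlt_dec r 0 then -1 else 0.

Definition feasP (n : nat) (f : vec n -> erl) (Omega : vec n -> Prop) (delta : R)
  (x : vec n) : Prop := ele (f x) (Fin delta) /\ Omega x.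

Definition optP (n m : nat) (b : 'I_n -> 'I_m) (p : pexp) (f : vec n -> erl)
  (Omega : vec n -> Prop) (delta : R) (x : vec n) : Prop :=
  feasP f Omega delta x /\
  forall y, feasP f Omega delta y -> (l0 (G b p x) <= l0 (G b p y))%nat.

Definition optvalP (n m : nat) (b : 'I_n -> 'I_m) (p : pexp) (f : vec n -> erl)
  (Omega : vec n -> Prop) (delta : R) (s : nat) : Prop :=
  (exists x, feasP f Omega delta x /\ l0 (G b p x) = s) /\
  forall y, feasP f Omega delta y -> (s <= l0 (G b p y))%nat.

Definition feasQ (n m : nat) (b : 'I_n -> 'I_m) (p : pexp) (f : vec n -> erl)
  (Omega : vec n -> Prop) (delta : R) (x : vec n) (w : 'I_m -> R) : Prop :=
  sumI (fun i => (1 - w i) * G b p x i) = 0 /\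
  (forall i, 0 <= w i <= 1) /\ Omega x /\ ele (f x) (Fin delta).

Definition objQ (m : nat) (phi : R -> erl) (w : 'I_m -> R) : erl :=
  foldr eplus (Fin 0) (map (fun i => phi (w i)) (enum 'I_m)).

Definition optQ (n m : nat) (b : 'I_n -> 'I_m) (p : pexp) (phi : R -> erl)
  (f : vec n -> erl) (Omega : vec n -> Prop) (delta : R)
  (x : vec n) (w : 'I_m -> R) : Prop :=
  feasQ b p f Omega delta x w /\
  forall y v, feasQ b p f Omega delta y v -> ele (objQ phi w) (objQ phi v).

Definition optvalQ (n m : nat) (b : 'I_n -> 'I_m) (p : pexp) (phi : R -> erl)
  (f : vec n -> erl) (Omega : vec n -> Prop) (delta : R) (v : erl) : Prop :=
  (exists x w, feasQ b p f Omega delta x w /\ objQ phi w = v) /\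
  forall y u, feasQ b p f Omega delta y u -> ele v (objQ phi u).

(* Main.v *)
Require Import Defs.
From Stdlib Require Import Reals Lra.
From mathcomp Require Import ssreflect ssrfun ssrbool eqtype ssrnat seq fintype.
Open Scope R_scope.

Lemma foldr_max_ge0 (l : seq R) : 0 <= foldr Rmax 0 l.
Proof. elim: l => [|a l IH] /=; [lra|]. have := Rmax_r a (foldr Rmax 0 l); lra. Qed.

Lemma foldr_sum_ge0 (A : Type) (F : A -> R) (l : seq A) :
  (forall i, 0 <= F i) -> 0 <= foldr Rplus 0 (map F l).
Proof. move=> H; elim: l => [|a l IH] /=; [lra|]. have := H a; lra. Qed.
Arguments foldr_sum_ge0 {A}.

Lemma rpow_ge0 a q : 0 <= rpow a q.
Proof.
rewrite /rpow; destruct (Req_EM_T a 0); simpl; [lra|].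
rewrite /Rpower; left; apply: exp_pos.
Qed.

Lemma G_ge0 n m (b : 'I_n -> 'I_m) p x i : 0 <= G b p x i.
Proof.
rewrite /G /pnorm_sub; case: p => [q|]; [apply: rpow_ge0|apply: foldr_max_ge0].
Qed.
Arguments G_ge0 {n m}.

Lemma sum_zero (A : eqType) (F : A -> R) (l : seq A) :
  (forall i, 0 <= F i) -> foldr Rplus 0 (map F l) = 0 -> forall i, i \in l -> F i = 0.
Proof.
move=> H; elim: l => [|a l IH] //= Hs i; rewrite in_cons => /orP [/eqP ->|Hi].
- have := foldr_sum_ge0 F l H; have := H a; lra.
- apply: IH Hi. have := foldr_sum_ge0 F l H; have := H a; lra.
Qed.

Lemma obj_fin (A : Type) (phi : R -> erl) (w : A -> R) (g : A -> R) (l : seq A) :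
  (forall i, phi (w i) = Fin (g i)) ->
  foldr eplus (Fin 0) (map (fun i => phi (w i)) l) = Fin (foldr Rplus 0 (map g l)).
Proof. move=> H; elim: l => [|a l IH] //=; by rewrite IH H. Qed.

Lemma count_le (A : Type) (P : pred A) (g : A -> R) (l : seq A) :
  (forall i, 0 <= g i) -> (forall i, P i -> g i = 1) ->
  INR (count P l) <= foldr Rplus 0 (map g l).
Proof.
move=> H0 H1; elim: l => [|a l IH] /=; [lra|].
case E: (P a).
- rewrite add1n S_INR (H1 a E); lra.
- rewrite add0n; have := H0 a; lra.
Qed.

Lemma count_eq (A : Type) (P : pred A) (g : A -> R) (l : seq A) :
  (forall i, ~~ P i -> g i = 0) -> (forall i, P i -> g i = 1) ->
  INR (count P l) = foldr Rplus 0 (map g l).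
Proof.
move=> H0 H1; elim: l => [|a l IH] /=; [lra|].
case E: (P a).
- rewrite add1n S_INR (H1 a E); lra.
- rewrite add0n H0 ?E //; lra.
Qed.

Theorem lemma3p1 (n m : nat) (b : 'I_n -> 'I_m)
  (Hpart : forall i : 'I_m, exists j : 'I_n, b j = i)
  (phi : R -> erl) (tstar : R) (Hphi : in_Phi phi tstar)
  (f : vec n -> erl) (Hfp : proper_vec f) (Hfl : lsc_vec f)
  (Omega : vec n -> Prop) (HOm : closed_vec Omega)
  (delta : R) (Hdelta : 0 <= delta)
  (p : pexp) (Hp : valid_p p)
  (s : nat)
  (Hsol : exists x, optP b p f Omega delta x)
  (Hs : optvalP b p f Omega delta s) :
  (forall xs, optP b p f Omega delta xs ->
     optQ b p phi f Omega delta xs (fun i => Rmax (sgn (G b p xs i)) tstar) /\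
     optvalQ b p phi f Omega delta (Fin (INR s))) /\
  (forall xs ws, optQ b p phi f Omega delta xs ws -> optP b p f Omega delta xs).
Proof.
destruct Hphi as (_ & _ & (a0 & b0 & Ha0 & Hb0 & Hdom) & _ & (Ht0 & Ht1) & Hpt & Hge & Hp1).
have phi_fin : forall t, 0 <= t <= 1 -> exists r, phi t = Fin r /\ 0 <= r.
  move=> t Ht; have := Hdom t ltac:(lra); have := Hge t Ht.
  case: (phi t) => [r|] //= H _; by exists r.
pose val := fun e : erl => match e with Fin r => r | PInf => 0 end.
have lower : forall y v, feasQ b p f Omega delta y v ->
    exists r, objQ phi v = Fin r /\ INR (l0 (G b p y)) <= r.
  move=> y v [Hsum [Hv _]].
  have Hz := sum_zero _ (fun i => (1 - v i) * G b p y i) (enum 'I_m)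
     ltac:(move=> i; have := G_ge0 b p y i; have := Hv i; nra) Hsum.
  have Hg : forall i, phi (v i) = Fin (val (phi (v i))).
    move=> i; have [r [-> _]] := phi_fin _ (Hv i); by [].
  exists (foldr Rplus 0 (map (fun i => val (phi (v i))) (enum 'I_m))); split.
    by rewrite /objQ (obj_fin _ _ _ (fun i => val (phi (v i)))).
  apply: count_le.
    move=> i; have [r [-> Hr]] := phi_fin _ (Hv i); by [].
  move=> i; case: Req_EM_T => // HG _.
  have := Hz i; rewrite mem_enum => /(_ isT) /Rmult_integral [H|H]; last by [].
  have -> : v i = 1 by lra. by rewrite Hp1.
have upper : forall x, feasP f Omega delta x ->
    feasQ b p f Omega delta x (fun i => Rmax (sgn (G b p x i)) tstar) /\
    objQ phi (fun i => Rmax (sgn (G b p x i)) tstar) = Fin (INR (l0 (G b p x))).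
  move=> x [Hf HO].
  have Hw : forall i, (G b p x i <> 0 -> Rmax (sgn (G b p x i)) tstar = 1) /\
                      (G b p x i = 0 -> Rmax (sgn (G b p x i)) tstar = tstar).
    move=> i; have Hg := G_ge0 b p x i; rewrite /sgn; split => HH.
    - case: Rlt_dec => Hl; last lra. apply: Rmax_left; lra.
    - rewrite HH; case: Rlt_dec => Hl; first lra.
      apply: Rmax_right; lra.
  split.
    split; last split; last by [].
      rewrite /sumI; have -> : forall l : seq 'I_m,
        foldr Rplus 0 (map (fun i => (1 - Rmax (sgn (G b p x i)) tstar) * G b p x i) l) = 0.
        elim => [|a l IH] //=; rewrite IH.
        case: (Req_EM_T (G b p x a) 0) => E.
        - rewrite E; ring.
        - rewrite (proj1 (Hw a) E); ring.
      by [].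
    move=> i; case: (Req_EM_T (G b p x i) 0) => E.
    - rewrite (proj2 (Hw i) E); lra.
    - rewrite (proj1 (Hw i) E); lra.
  rewrite /objQ (obj_fin _ _ _ (fun i => if Req_EM_T (G b p x i) 0 then 0 else 1)).
    rewrite /l0 (count_eq _ _ (fun i => if Req_EM_T (G b p x i) 0 then 0 else 1)) //.
    - by move=> i; case: Req_EM_T.
    - by move=> i; case: Req_EM_T.
  move=> i; case: Req_EM_T => E.
  - by rewrite (proj2 (Hw i) E).
  - by rewrite (proj1 (Hw i) E).
case: Hs => [[x0 [Hx0 Hx0s]] Hsmin].
split.
- move=> xs [Hxs Hxsmin].
  have Es : l0 (G b p xs) = s.
    apply/eqP; rewrite eqn_leq; apply/andP; split.
      by rewrite -Hx0s; apply: Hxsmin.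
    by apply: Hsmin.
  have [HQ HO] := upper xs Hxs; rewrite Es in HO.
  have Hlow : forall y u, feasQ b p f Omega delta y u -> ele (Fin (INR s)) (objQ phi u).
    move=> y u Hyu; have [r [-> Hr]] := lower y u Hyu; simpl.
    have : feasP f Omega delta y by case: Hyu => [_ [_ [? ?]]]; split.
    move/Hsmin => /leP /le_INR; lra.
  split.
    split => //; rewrite HO; exact: Hlow.
  split => //; by exists xs, (fun i => Rmax (sgn (G b p xs i)) tstar).
- move=> xs ws [HQ Hmin].
  have Hf : feasP f Omega delta xs by case: HQ => [_ [_ [? ?]]]; split.
  split => // y Hy.
  have [HQ0 HO0] := upper x0 Hx0.
  have := Hmin _ _ HQ0; rewrite HO0 Hx0s.
  have [r [-> Hr]] := lower xs ws HQ; simpl => Hrs.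
  have Hle : (l0 (G b p xs) <= s)%nat.
    apply/leP; apply: INR_le; lra.
  exact: leq_trans Hle (Hsmin y Hy).
Qed.
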